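(* Let $\mathcal Y\subset\mathbb R^d$ be a finite set such that no element of $\mathcal Y$ is a strict convex combination of other elements of $\mathcal Y$. Let $\varepsilon>0$ and let $\mathbf Z$ be a standard multivariate normal random vector on $\mathbb R^d$. For $s_1,s_2\in V_\Delta$ with $s_1\neq s_2$, define $f_k(y;Z)=s_k(y)+\varepsilon Z^\top y$ for $k=1,2$. Then $$\mathbb P_{\mathbf Z}\Big(\operatorname*{argmax}_{y\in\mathcal Y}f_1(y;\mathbf Z)\cap\operatorname*{argmax}_{y\in\mathcal Y}f_2(y;\mathbf Z)=\emptyset\Big)>0.$$
   Context: $\mathbb R^{\mathcal Y}$ is the space of vectors $s$ indexed by $\mathcal Y$ with components $s(y)$, and $V_\Delta=\{s\in\mathbb R^{\mathcal Y}:\sum_{y\in\mathcal Y}s(y)=0\}$ (the direction of the affine hull of the probability simplex $\Delta^{\mathcal Y}$). *)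

(* Defs.v *)
From HB Require Import structures.
From mathcomp Require Import all_boot all_order all_algebra.
From mathcomp Require Import finmap.
From mathcomp Require Import all_classical all_reals all_analysis.
Set Implicit Arguments. Unset Strict Implicit. Unset Printing Implicit Defensive.
Import Order.TTheory GRing.Theory Num.Theory.
Local Open Scope classical_set_scope.
Local Open Scope ring_scope.

Definition dotv {R : realType} {d : nat} (z y : 'rV[R]_d) : R :=
  \sum_(i < d) z ord0 i * y ord0 i.

Definition strict_convex_comb_of_others {R : realType} {d : nat}
    (Y : {fset 'rV[R]_d}) (y : Y) : Prop :=
  exists lam : Y -> R,
    (forall x, 0 <= lam x) /\ lam y = 0 /\ \sum_(x : Y) lam x = 1 /\
    \sum_(x : Y) lam x *: (val x) = val y.

Definition in_VDelta {R : realType} {d : nat} (Y : {fset 'rV[R]_d})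
  (s : Y -> R) : Prop := \sum_(y : Y) s y = 0.

Definition argmax_set {R : realType} {I : Type} (f : I -> R) : set I :=
  [set y | forall x, f x <= f y].

Definition pert_obj {R : realType} {d : nat} (Y : {fset 'rV[R]_d})
  (s : Y -> R) (eps : R) (z : 'rV[R]_d) : Y -> R :=
  fun y => s y + eps * dotv z (val y).

Definition std_normal_vector {R : realType} {dT : measure_display}
    {T : measurableType dT} (P : probability T R) {d : nat}
    (Z : T -> 'rV[R]_d) : Prop :=
  (forall i : 'I_d, measurable_fun setT (fun w => Z w ord0 i)) /\
  (forall i : 'I_d, forall B : set R, measurable B ->
     P ((fun w => Z w ord0 i) @^-1` B) = normal_prob 0 1 B) /\
  (forall B : 'I_d -> set R, (forall i, measurable (B i)) ->
     P (\bigcap_(i in [set: 'I_d]) ((fun w => Z w ord0 i) @^-1` B i)) =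
     (\prod_(i < d) P ((fun w => Z w ord0 i) @^-1` B i))%E).

(* Main.v *)
Require Import Defs.
From HB Require Import structures.
From mathcomp Require Import all_boot all_order all_algebra.
From mathcomp Require Import finmap.
From mathcomp Require Import all_classical all_reals all_analysis.
From mathcomp Require Import ring lra measurable_realfun.
Import Order.TTheory GRing.Theory Num.Theory.
Local Open Scope classical_set_scope.
Local Open Scope ring_scope.
Section Dot.
Variables (R : realType) (d : nat).
Implicit Types u v w : 'rV[R]_d.

Lemma dotvDr u v w : dotv u (v + w) = dotv u v + dotv u w.
Proof. by rewrite /dotv -big_split; apply: eq_bigr => i _; rewrite mxE mulrDr. Qed.
Lemma dotvDl u v w : dotv (u + v) w = dotv u w + dotv v w.
Proof. by rewrite /dotv -big_split; apply: eq_bigr => i _; rewrite mxE mulrDl. Qed.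
Lemma dotvZr a u v : dotv u (a *: v) = a * dotv u v.
Proof. by rewrite /dotv mulr_sumr; apply: eq_bigr => i _; rewrite mxE mulrCA. Qed.
Lemma dotvZl a u v : dotv (a *: u) v = a * dotv u v.
Proof. by rewrite /dotv mulr_sumr; apply: eq_bigr => i _; rewrite mxE mulrA. Qed.
Lemma dotvNr u v : dotv u (- v) = - dotv u v.
Proof. by rewrite -scaleN1r dotvZr mulN1r. Qed.
Lemma dotvNl u v : dotv (- u) v = - dotv u v.
Proof. by rewrite -scaleN1r dotvZl mulN1r. Qed.
Lemma dotvBr u v w : dotv u (v - w) = dotv u v - dotv u w.
Proof. by rewrite dotvDr dotvNr. Qed.
Lemma dotvBl u v w : dotv (u - v) w = dotv u w - dotv v w.
Proof. by rewrite dotvDl dotvNl. Qed.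
Lemma dotv0r u : dotv u 0 = 0.
Proof. by rewrite /dotv big1 // => i _; rewrite mxE mulr0. Qed.
Lemma dotvC u v : dotv u v = dotv v u.
Proof. by apply: eq_bigr => i _; rewrite mulrC. Qed.
Lemma dotv_sumr (I : finType) (P : pred I) (F : I -> 'rV[R]_d) u :
  dotv u (\sum_(i | P i) F i) = \sum_(i | P i) dotv u (F i).
Proof.
rewrite /dotv exchange_big /=; apply: eq_bigr => j _.
by rewrite summxE mulr_sumr.
Qed.
Lemma dotv_gt0 v : v != 0 -> 0 < dotv v v.
Proof.
move=> v0; rewrite /dotv lt_def; apply/andP; split; last first.
  by apply: sumr_ge0 => i _; rewrite -expr2 sqr_ge0.
apply/negP => /eqP /psumr_eq0P H.
have: v = 0.
  apply/rowP => j; rewrite mxE; apply/eqP; rewrite -sqrf_eq0 expr2.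
  by rewrite H // => i _; rewrite -expr2 sqr_ge0.
by move/eqP; rewrite (negbTE v0).
Qed.
Lemma dotv_abs u v : `|dotv u v| <= (\sum_i `|u ord0 i|) * (\sum_i `|v ord0 i|).
Proof.
rewrite /dotv; apply: le_trans (ler_norm_sum _ _ _) _.
rewrite mulr_suml; apply: ler_sum => i _; rewrite normrM.
apply: ler_wpM2l => //.
by rewrite (bigD1 i) //= lerDl sumr_ge0.
Qed.
End Dot.
Arguments dotv_gt0 {R d v}.
Arguments dotv_abs {R d}.

Section Helpers.
Variable R : realType.
Lemma fin_lb (I : finType) (P : pred I) (f : I -> R) :
  (forall i, P i -> 0 < f i) -> exists2 e : R, 0 < e & forall i, P i -> e <= f i.
Proof.
move=> fpos; case: (pickP P) => [i0 Pi0|P0].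
  case: (arg_minP f Pi0) => j Pj jmin.
  by exists (f j); [exact: fpos|exact: jmin].
by exists 1 => // i; rewrite P0.
Qed.
Lemma fin_ub (I : finType) (P : pred I) (f : I -> R) :
  exists K : R, forall i, P i -> f i <= K.
Proof.
exists (\sum_i `|f i|) => i _; apply: le_trans (ler_norm _) _.
by rewrite (bigD1 i) //= lerDl sumr_ge0.
Qed.
End Helpers.
Section Gordan.
Variables (R : realType) (d : nat).

Lemma sum_ind (I : finType) (i0 : I) (F : I -> 'rV[R]_d) :
  \sum_i (i == i0)%:R *: F i = F i0.
Proof.
rewrite (bigD1 i0) //= eqxx scale1r big1 ?addr0 // => i /negbTE ->.
by rewrite scale0r.
Qed.
Lemma sum_indR (I : finType) (i0 : I) (x : R) :
  \sum_(i : I) (i == i0)%:R * x = x.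
Proof.
rewrite (bigD1 i0) //= eqxx mul1r big1 ?addr0 // => i /negbTE ->.
by rewrite mul0r.
Qed.

Lemma gordan (I : finType) (n : nat) : forall (P : {set I}) (v : I -> 'rV[R]_d),
  #|P| = n ->
  (exists lam : I -> R, [/\ forall i, 0 <= lam i, forall i, i \notin P -> lam i = 0,
       \sum_i lam i = 1 & \sum_i lam i *: v i = 0])
  \/ (exists u, forall i, i \in P -> dotv u (v i) < 0).
Proof.
elim: n => [|n IH] P v cP.
  right; exists 0 => i; move/eqP: cP; rewrite cards_eq0 => /eqP ->.
  by rewrite inE.
have : (0 < #|P|)%N by rewrite cP.
rewrite card_gt0 => /set0Pn [i0 Pi0].
set P' := P :\ i0.
have cP' : #|P'| = n by move: cP; rewrite (cardsD1 i0) Pi0 add1n => -[].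
have sP' : forall i, i \in P' -> i \in P by move=> i; rewrite !inE => /andP[].
have P'i0 : i0 \notin P' by rewrite !inE eqxx.
have inPP' : forall i, i \in P -> i != i0 -> i \in P'.
  by move=> i Pi ii0; rewrite !inE ii0.
case: (IH P' v cP') => [[lam [l0 lP l1 lv]]|[u hu]].
  left; exists lam; split => // i iP; apply: lP; apply/negP => /sP'.
  by rewrite (negbTE iP).
set a := dotv u (v i0).
case: (ltrgtP a 0) => [a0|a0|a0].
- right; exists u => i Pi; case: (eqVneq i i0) => [->//|ii0].
  exact/hu/inPP'.
-
  pose w i := a *: v i - dotv u (v i) *: v i0.
  case: (IH P' w cP') => [[mu [m0 mP m1 mw]]|[u' hu']].
  + set b := \sum_i mu i * dotv u (v i).
    have b0 : b < 0.
      have [j mj] : exists j, mu j != 0.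
        case: (pickP (fun j => mu j != 0)) => [j mj|H]; first by exists j.
        move: m1; rewrite big1 => [/esym/eqP|i _]; first by rewrite oner_eq0.
        by apply/eqP; have := H i => /negbFE.
      have jP : j \in P'.
        by case: (boolP (j \in P')) => // /mP mj0; rewrite mj0 eqxx in mj.
      have mjp : 0 < mu j by rewrite lt_def mj m0.
      rewrite /b (bigD1 j) //=.
      have : \sum_(i | i != j) mu i * dotv u (v i) <= 0.
        apply: sumr_le0 => i _; case: (boolP (i \in P')) => iP.
          by apply: mulr_ge0_le0 => //; apply: ltW; apply: hu.
        by rewrite mP // mul0r.
      have : mu j * dotv u (v j) < 0 by rewrite pmulr_rlt0 // hu.
      lra.
    left; exists (fun i => (a * mu i + (i == i0)%:R * - b) / (a - b)); split.
    * move=> i; apply: divr_ge0; last lra.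
      by apply: addr_ge0; [apply: mulr_ge0 => //; lra|apply: mulr_ge0 => //; lra].
    * move=> i iP; have ii0 : (i == i0) = false.
        by apply/negP => /eqP ii0; move: iP; rewrite ii0 Pi0.
      rewrite ii0 mP /=; first by rewrite !(mulr0, mul0r, add0r).
      by apply/negP => /sP'; rewrite (negbTE iP).
    * rewrite -mulr_suml big_split /= -mulr_sumr m1 sum_indR mulr1.
      have hab : 0 < a - b by lra.
      by rewrite divff // gt_eqF.
    * under eq_bigr do rewrite mulrC -scalerA.
      rewrite -scaler_sumr; apply/eqP; rewrite scaler_eq0; apply/orP; right.
      under eq_bigr do rewrite scalerDl -scalerA -scalerA.
      rewrite big_split /= -!scaler_sumr -/(sum_ind _ _) sum_ind.
      move: mw; rewrite /w.
      under eq_bigr do rewrite scalerBr !scalerA.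
      rewrite sumrB -scaler_suml -/b.
      under eq_bigr do rewrite mulrC -scalerA.
      rewrite -scaler_sumr => /eqP; rewrite subr_eq0 => /eqP ->.
      by rewrite scaleNr subrr.
  + set c := dotv u' (v i0).
    have qpos : forall i, i \in P' -> 0 < dotv u' (w i) / dotv u (v i).
      move=> i iP; rewrite ltr_ndivlMr ?mul0r ?hu' ?hu // ?sP' //.
    have [e e0 he] := @fin_lb R _ (fun i => i \in P') _ qpos.
    right; exists (a *: u' - c *: u - (e / 2) *: u) => i Pi.
    rewrite !dotvBl !dotvZl.
    case: (eqVneq i i0) => [->|ii0].
      rewrite -/a -/c; have : 0 < e / 2 * a by apply: mulr_gt0 => //; lra.
      lra.
    have iP := inPP' _ Pi ii0.
    have hw : dotv u' (w i) = a * dotv u' (v i) - dotv u (v i) * c.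
      by rewrite /w dotvBr !dotvZr.
    have uv := hu _ iP.
    have := he _ iP; rewrite ler_ndivlMr // => H.
    have : dotv u' (w i) < 0 by apply: hu'.
    have : e / 2 * dotv u (v i) > e * dotv u (v i) by rewrite ltr_nM2r //; lra.
    move: H; rewrite hw; lra.
-
  case: (eqVneq (v i0) 0) => [v0|v0].
    left; exists (fun i => (i == i0)%:R); split.
    * by move=> i; case: (i == i0).
    * by move=> i iP; case: eqVneq => // ii0; move: iP; rewrite ii0 Pi0.
    * by rewrite -[RHS](@sum_indR _ i0 1); apply: eq_bigr => i _; rewrite mulr1.
    * by rewrite sum_ind.
  have qpos : forall i, i \in P' -> 0 < - dotv u (v i).
    by move=> i iP; rewrite oppr_gt0 hu.
  have [e e0 he] := @fin_lb R _ (fun i => i \in P') _ qpos.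
  have [K hK] := @fin_ub R _ [pred i | i \in P'] (fun i => `|dotv (v i0) (v i)|).
  have K0 : 0 <= `|K| by [].
  right; exists (u - (e / (`|K| + 1)) *: v i0) => i Pi.
  have t0 : 0 < e / (`|K| + 1) by apply: divr_gt0 => //; lra.
  rewrite dotvBl dotvZl.
  case: (eqVneq i i0) => [->|ii0].
    rewrite -/a a0; have := dotv_gt0 v0; have : 0 < e / (`|K| + 1) by [].
    move=> h1 h2; have := mulr_gt0 h1 h2; lra.
  have iP := inPP' _ Pi ii0.
  have h1 := he _ iP.
  have h2 : `|dotv (v i0) (v i)| <= `|K| by apply: le_trans (hK _ iP) (ler_norm _).
  have h3 : e / (`|K| + 1) * `|dotv (v i0) (v i)| < e.
    apply: (le_lt_trans (ler_wpM2l (ltW t0) h2)).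
    rewrite mulrAC ltr_pdivrMr; last lra.
    rewrite mulrDr mulr1; lra.
  have := ler_norm (- (e / (`|K| + 1) * dotv (v i0) (v i))).
  rewrite normrN normrM gtr0_norm //.
  lra.
Qed.

Lemma separation (Y : {fset 'rV[R]_d}) (y0 : Y) :
  ~ strict_convex_comb_of_others y0 ->
  exists u, forall x : Y, x != y0 -> dotv u (val x) < dotv u (val y0).
Proof.
move=> hY.
case: (@gordan Y _ [set x | x != y0] (fun x => val x - val y0) erefl)
   => [[lam [l0 lP l1 lv]]|[u hu]].
  exfalso; apply: hY; exists lam; split => //; split.
    by apply: lP; rewrite inE eqxx.
  split => //.
  move: lv; under eq_bigr do rewrite scalerBr.
  rewrite sumrB -scaler_suml l1 scale1r => /eqP; rewrite subr_eq0 => /eqP.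
  by [].
exists u => x xy; have := hu x; rewrite inE xy dotvBr => /(_ isT); lra.
Qed.
End Gordan.
Arguments separation {R d Y y0}.
Definition N1 {R : realType} {d : nat} (v : 'rV[R]_d) : R := \sum_i `|v ord0 i|.

Definition amax {R : realType} {I : finType} (P : pred I) (y0 : I) (f : I -> R) : R :=
  f [arg max_(y > y0 | P y) f y]%O.

Section Aux.
Variables (R : realType) (d : nat).

Lemma N1_ge0 (v : 'rV[R]_d) : 0 <= N1 v.
Proof. by apply: sumr_ge0. Qed.

Lemma N1Z (a : R) (v : 'rV[R]_d) : N1 (a *: v) = `|a| * N1 v.
Proof. by rewrite /N1 mulr_sumr; apply: eq_bigr => i _; rewrite mxE normrM. Qed.

Lemma N1_box (v : 'rV[R]_d) (r : R) : (forall i, `|v ord0 i| < r) -> N1 v <= d%:R * r.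
Proof.
move=> h; rewrite /N1; apply: le_trans (_ : \sum_(i < d) r <= _).
  by apply: ler_sum => i _; apply: ltW.
by rewrite sumr_const card_ord mulr_natl.
Qed.

Lemma amax_ge (I : finType) (P : pred I) y0 (f : I -> R) y :
  P y0 -> P y -> f y <= amax P y0 f.
Proof. by move=> Py0 Py; rewrite /amax; case: (arg_maxP f Py0) => j Pj; apply. Qed.

Lemma amax_attain (I : finType) (P : pred I) y0 (f : I -> R) :
  P y0 -> exists2 y, P y & amax P y0 f = f y.
Proof. by move=> Py0; rewrite /amax; case: (arg_maxP f Py0) => j Pj _; exists j. Qed.

Lemma amax_lip (I : finType) (P : pred I) y0 (f g : I -> R) (e : R) :
  P y0 -> (forall y, `|f y - g y| <= e) -> `|amax P y0 f - amax P y0 g| <= e.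
Proof.
move=> Py0 h.
have [a Pa ea] := @amax_attain I P y0 f Py0.
have [b Pb eb] := @amax_attain I P y0 g Py0.
have fb := @amax_ge I P y0 f b Py0 Pb.
have ga := @amax_ge I P y0 g a Py0 Pa.
rewrite ea eb in fb ga *.
have := h a; have := h b.
move=> hb ha; rewrite ler_norml; apply/andP; split.
  have := ler_norml (f b - g b) e; rewrite hb => /esym/andP[+ _]; lra.
have := ler_norml (f a - g a) e; rewrite ha => /esym/andP[_]; lra.
Qed.

Lemma dIVT (h : nat -> R) (c : R) (N : nat) :
  c <= h 0%N -> h N < c -> exists k, [/\ (k < N)%N, c <= h k & h k.+1 < c].
Proof.
elim: N => [|N IH] h0 hN; first by move: (le_lt_trans h0 hN); rewrite ltxx.
case: (ltP (h N) c) => hc.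
  have [k [kN h1 h2]] := IH h0 hc; exists k; split => //; exact: ltnW.
by exists N.
Qed.

Lemma pert_lip (Y : {fset 'rV[R]_d}) (s : Y -> R) (eps : R) (z z' : 'rV[R]_d) (y : Y) :
  0 <= eps ->
  `|pert_obj s eps z y - pert_obj s eps z' y| <= eps * (N1 (z - z') * \sum_(x : Y) N1 (val x)).
Proof.
move=> e0; rewrite /pert_obj.
have -> : s y + eps * dotv z (val y) - (s y + eps * dotv z' (val y)) =
          eps * dotv (z - z') (val y) by rewrite dotvBl; ring.
rewrite normrM ger0_norm //; apply: ler_wpM2l => //.
apply: le_trans (dotv_abs _ _) _; apply: ler_wpM2l; first exact: N1_ge0.
by rewrite (bigD1 y) //= lerDl; apply: sumr_ge0 => x _; apply: N1_ge0.
Qed.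

Lemma exposed (Y : {fset 'rV[R]_d}) (s : Y -> R) (eps : R) (u : 'rV[R]_d) (y0 : Y) (M : R) :
  0 < eps -> (forall x : Y, x != y0 -> dotv u (val x) < dotv u (val y0)) ->
  exists t : R, forall x : Y, x != y0 ->
    M <= pert_obj s eps (t *: u) y0 - pert_obj s eps (t *: u) x.
Proof.
move=> e0 hu.
have [g g0 hg] := @fin_lb R _ (fun x => x != y0) (fun x => dotv u (val y0) - dotv u (val x))
  (fun x hx => ltac:(have := hu x hx; lra)).
have [B hB] := @fin_ub R _ predT (fun x => `|s x|).
exists ((`|M| + 2 * `|B|) / (eps * g)) => x xy0.
set t := (`|M| + 2 * `|B|) / (eps * g).
have et : eps * t * g = `|M| + 2 * `|B|.
  have hg0 : eps * g != 0 by rewrite gt_eqF // mulr_gt0.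
  rewrite /t (_ : eps * (_ / (eps * g)) * g =
     (`|M| + 2 * `|B|) * ((eps * g) / (eps * g))); last by ring.
  by rewrite divff ?mulr1.
have t0 : 0 <= t by rewrite /t divr_ge0 // ?addr_ge0 ?mulr_ge0 // ltW // mulr_gt0.
rewrite /pert_obj !dotvZl.
have h1 := hg x xy0.
have h2 : eps * t * g <= eps * t * (dotv u (val y0) - dotv u (val x)).
  by apply: ler_wpM2l => //; apply: mulr_ge0 => //; apply: ltW.
have hx := le_trans (ler_norm _) (hB x isT).
have hy := le_trans (ler_norm _) (hB y0 isT).
have := ler_norml (s x) `|B|; rewrite (le_trans (hB x isT) (ler_norm _)) => /esym/andP[hx1 hx2].
have := ler_norml (s y0) `|B|; rewrite (le_trans (hB y0 isT) (ler_norm _)) => /esym/andP[hy1 _].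
have hM := ler_norm M.
have hB0 : 0 <= `|B| by [].
move: h2; rewrite et => h2.
have -> : s y0 + eps * (t * dotv u (val y0)) - (s x + eps * (t * dotv u (val x))) =
  s y0 - s x + eps * t * (dotv u (val y0) - dotv u (val x)) by ring.
lra.
Qed.
End Aux.
Arguments pert_lip {R d Y}.
Arguments exposed {R d Y}.
Arguments dIVT {R}.
Lemma det_main (R : realType) (d : nat) (Y : {fset 'rV[R]_d})
  (hY : forall y : Y, ~ strict_convex_comb_of_others y)
  (eps : R) (heps : 0 < eps)
  (s1 s2 : Y -> R) (hs1 : in_VDelta s1) (hs2 : in_VDelta s2) (hs12 : s1 <> s2) :
  exists z0 : 'rV[R]_d, exists2 r : R, 0 < r & forall z : 'rV[R]_d,
    (forall i, `|z ord0 i - z0 ord0 i| < r) ->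
    argmax_set (pert_obj s1 eps z) `&` argmax_set (pert_obj s2 eps z) = set0.
Proof.
pose D y := s1 y - s2 y.
have [ylo [yhi hlh]] : exists ylo yhi, D ylo < D yhi.
  have [y Dy] : exists y, D y != 0.
    apply/not_existsP => H; apply: hs12; apply/funext => y.
    by have /negP := H y; rewrite negbK subr_eq0 => /eqP.
  have [x Dx] : exists x, D x != D y.
    apply/not_existsP => H; move: Dy; apply/negP; rewrite negbK.
    have hs : \sum_(x : Y) D x = 0.
      by rewrite /D sumrB; move: hs1 hs2; rewrite /in_VDelta => -> ->; rewrite subrr.
    have : \sum_(x : Y) D x = \sum_(x : Y) D y.
      by apply: eq_bigr => x _; have /negP := H x; rewrite negbK => /eqP.
    rewrite hs sumr_const => /esym/eqP; rewrite mulrn_eq0 => /orP[|//].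
    by move=> /eqP/card0_eq/(_ y); rewrite !inE.
  case: (ltgtP (D x) (D y)) => [h|h|h]; first by exists x, y.
    by exists y, x.
  by rewrite h eqxx in Dx.
set c := D ylo.
pose S := fun y => D y <= c.
pose Sc := fun y => c < D y.
have Slo : S ylo by rewrite /S.
have Schi : Sc yhi by [].
have [del del0 hdel] := @fin_lb R (Y * Y)%type
   (fun p => Sc p.1 && S p.2) (fun p => D p.1 - D p.2)
   (fun p hp => ltac:(move: hp => /andP[h1 h2]; rewrite /S /Sc in h1 h2; lra)).
pose G z := amax S ylo (pert_obj s2 eps z) - amax Sc yhi (pert_obj s2 eps z).
have f12 : forall z y, pert_obj s1 eps z y = pert_obj s2 eps z y + D y.
  by move=> z y; rewrite /pert_obj /D; ring.
have good : forall z, 0 < G z < del ->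
    argmax_set (pert_obj s1 eps z) `&` argmax_set (pert_obj s2 eps z) = set0.
  move=> z /andP[G0 Gd]; apply/seteqP; split => // y [h1 h2].
  have [ys Sys eys] := @amax_attain R _ S ylo (pert_obj s2 eps z) Slo.
  have [xc Sxc exc] := @amax_attain R _ Sc yhi (pert_obj s2 eps z) Schi.
  rewrite /G eys exc in G0 Gd.
  case: (leP (D y) c) => hy.
    have := h1 xc; rewrite !f12.
    have := @amax_ge R _ S ylo (pert_obj s2 eps z) y Slo hy; rewrite eys.
    have := hdel (xc, y); rewrite /= Sxc /S hy => /(_ isT).
    lra.
  have := h2 ys.
  have := @amax_ge R _ Sc yhi (pert_obj s2 eps z) y Schi hy; rewrite exc.
  lra.
set K := \sum_(x : Y) N1 (val x).
have K0 : 0 <= K by apply: sumr_ge0 => x _; apply: N1_ge0.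
have Glip : forall z z', `|G z - G z'| <= 2 * (eps * (N1 (z - z') * K)).
  move=> z z'.
  have h1 := @amax_lip R _ S ylo _ _ _ Slo (fun y => pert_lip s2 eps z z' y (ltW heps)).
  have h2 := @amax_lip R _ Sc yhi _ _ _ Schi (fun y => pert_lip s2 eps z z' y (ltW heps)).
  rewrite /G.
  set a1 := amax S ylo _ in h1 *; set a2 := amax S ylo _ in h1 *.
  set b1 := amax Sc yhi _ in h2 *; set b2 := amax Sc yhi _ in h2 *.
  have := ler_normD (a1 - a2) (b2 - b1); rewrite distrC in h2.
  rewrite (_ : a1 - a2 + (b2 - b1) = a1 - b1 - (a2 - b2)); last by ring.
  rewrite -/K in h1 h2; lra.
have [ulo hulo] := separation (hY ylo).
have [uhi huhi] := separation (hY yhi).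
have [ta hta] := exposed s2 eps ulo ylo del heps hulo.
have [tb htb] := exposed s2 eps uhi yhi 1 heps huhi.
set za := ta *: ulo; set zb := tb *: uhi.
have Gza : del <= G za.
  have [xc Sxc exc] := @amax_attain R _ Sc yhi (pert_obj s2 eps za) Schi.
  have := @amax_ge R _ S ylo (pert_obj s2 eps za) ylo Slo Slo.
  have xlo : xc != ylo by apply/eqP => e; rewrite e /Sc ltxx in Sxc.
  have := hta xc xlo.
  rewrite /G exc; lra.
have Gzb : G zb < del / 2.
  have [ys Sys eys] := @amax_attain R _ S ylo (pert_obj s2 eps zb) Slo.
  have := @amax_ge R _ Sc yhi (pert_obj s2 eps zb) yhi Schi Schi.
  have yhi' : ys != yhi by apply/eqP => e; move: Sys; rewrite e /S; move: Schi; rewrite /Sc; lra.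
  have := htb ys yhi'.
  rewrite /G eys; lra.
set w := zb - za.
set A := 2 * (eps * (N1 w * K)).
have A0 : 0 <= A by rewrite /A !mulr_ge0 // ?N1_ge0 // ltW.
set N := (Num.truncn (4 * A / del)).+1.
have hN : 4 * A / del < N%:R by apply: truncnS_gt.
have N0 : (0 < N%:R :> R) by rewrite ltr0n.
pose zk (k : nat) := za + (k%:R / N%:R) *: w.
pose h k := G (zk k).
have h0 : del / 2 <= h 0%N.
  by rewrite /h /zk mul0r scale0r addr0; lra.
have hNN : h N < del / 2.
  by rewrite /h /zk divff ?gt_eqF // scale1r /w addrC subrK.
have [k [kN hk1 hk2]] := dIVT _ _ _ h0 hNN.
have step : `|h k.+1 - h k| < del / 4.
  apply: le_lt_trans (Glip _ _) _.
  have -> : zk k.+1 - zk k = N%:R^-1 *: w.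
    rewrite /zk opprD addrACA subrr add0r -scalerBl; congr (_ *: _).
    by rewrite -mulrBl -natrB // subSnn mul1r.
  rewrite N1Z ger0_norm ?invr_ge0 ?ltW //.
  rewrite (_ : 2 * (eps * (N%:R^-1 * N1 w * K)) = A / N%:R); last by rewrite /A; ring.
  move: hN; rewrite ltr_pdivrMr // => hN.
  rewrite ltr_pdivrMr //; move: hN; clear -del0; lra.
set z0 := zk k.
have Gz0 : del / 2 <= G z0 < del / 2 + del / 4.
  apply/andP; split; first exact: hk1.
  change (h k < del / 2 + del / 4).
  have := ler_norm (h k - h k.+1); rewrite distrC; move: step hk2; clear -del0; lra.
set Q := eps * K * d%:R.
have Q0 : 0 <= Q by rewrite /Q !mulr_ge0 // ltW.
have q1 : 0 < 8 * (Q + 1) by clear -Q0; lra.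
exists z0, (del / (8 * (Q + 1))); first exact: divr_gt0.
move=> z hz; apply: good.
set r := del / (8 * (Q + 1)) in hz.
have r0 : 0 < r by exact: divr_gt0.
have hr : r * (8 * (Q + 1)) = del by rewrite /r divfK // gt_eqF.
have hN1 : N1 (z - z0) <= d%:R * r.
  by apply: N1_box => i; rewrite mxE [X in `|_ + X|]mxE.
have e0 := Glip z z0.
have e1 : 2 * (eps * (N1 (z - z0) * K)) <= 2 * (eps * (d%:R * r * K)).
  apply: ler_wpM2l => //; apply: ler_wpM2l; first exact: ltW.
  by apply: ler_wpM2r.
have e2 : 2 * (eps * (d%:R * r * K)) = 2 * Q * r by rewrite /Q; ring.
have e3 : 8 * Q * r < del.
  have : 0 < 8 * r by clear -r0; lra.
  move: hr; rewrite (_ : r * (8 * (Q + 1)) = 8 * Q * r + 8 * r); last by ring.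
  clear -r0; lra.
move: Gz0 => /andP[g1 g2].
have := ler_norml (G z - G z0) (2 * (eps * (N1 (z - z0) * K))).
rewrite e0 => /esym/andP[e5 e6].
move: e1 e2 e3 e5 e6 g1 g2 Q0 r0.
set a := G z; set b := G z0; set x := 2 * (eps * (N1 (z - z0) * K)).
set y := 2 * (eps * (d%:R * r * K)).
clear; move=> *; apply/andP; split; lra.
Qed.
Lemma normal_itv_gt0 (R : realType) (a b : R) : a < b ->
  (0 < normal_prob 0 1 [set` `]a, b[%R])%E.
Proof.
move=> ab.
set c := normal_peak (1 : R) * expR (- (a ^+ 2 + b ^+ 2) / (1 ^+ 2 *+ 2)).
have c0 : 0 < c by rewrite /c mulr_gt0 ?expR_gt0 // normal_peak_gt0 // oner_eq0.
have mI : measurable ([set` `]a, b[%R] : set R) by exact: measurable_itv.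
rewrite /normal_prob.
apply: (@lt_le_trans _ _ (\int[lebesgue_measure]_(x in [set` `]a, b[%R]) (cst c%:E) x)%E).
  rewrite integral_cst //.
  have := @lebesgue_measure_itv R `]a, b[%R; rewrite /= lte_fin ab => ->.
  by rewrite -EFinD mule_gt0 // lte_fin subr_gt0.
apply: ge0_le_integral => //.
- by move=> x _; rewrite /= lee_fin ltW.
- apply/measurable_EFinP; apply: measurable_funTS; exact: measurable_normal_pdf.
move=> x /=; rewrite in_itv /= => /andP[ax xb].
rewrite lee_fin normal_pdfE ?oner_eq0 //= /c; apply: ler_wpM2l; first exact: normal_peak_ge0.
rewrite /normal_fun ler_expR subr0 !mulNr lerN2; apply: ler_wpM2r.
  by rewrite invr_ge0 mulrn_wge0 // expr1n.
rewrite !expr2; case: (lerP 0 x) => hx; nra.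
Qed.

Lemma prodE_gt0 (R : realType) (n : nat) (F : 'I_n -> \bar R) :
  (forall i, (0 < F i)%E) -> (0 < \prod_(i < n) F i)%E.
Proof.
move=> hF; apply: (big_ind (fun x => (0 < x)%E)).
- by rewrite lte_fin ltr01.
- by move=> x y; exact: mule_gt0.
- by move=> i _; exact: hF.
Qed.
Lemma meas_pert (R : realType) (d : nat) (Y : {fset 'rV[R]_d})
  (dT : measure_display) (T : measurableType dT) (Z : T -> 'rV[R]_d)
  (hZ1 : forall i : 'I_d, measurable_fun setT (fun w => Z w ord0 i))
  (s : Y -> R) (eps : R) (y : Y) :
  measurable_fun setT (fun w => pert_obj s eps (Z w) y).
Proof.
rewrite /pert_obj /dotv.
apply: measurable_funD; first exact: measurable_cst.
apply: measurable_funM; first exact: measurable_cst.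
apply: measurable_sum => i; apply: measurable_funM => //; exact: measurable_cst.
Qed.

Lemma meas_lt (dT : measure_display) (T : measurableType dT) (R : realType)
  (f g : T -> R) : measurable_fun setT f -> measurable_fun setT g ->
  measurable [set w | f w < g w].
Proof.
move=> mf mg.
have mh : measurable_fun setT (fun w => g w - f w) by apply: measurable_funB.
have := mh measurableT _ (measurable_itv `]0, +oo[%R); rewrite setTI.
congr measurable; apply/seteqP; split => w /=; rewrite in_itv /= andbT subr_gt0 //.
Qed.

Lemma meas_goal (R : realType) (d : nat) (Y : {fset 'rV[R]_d})
  (dT : measure_display) (T : measurableType dT) (Z : T -> 'rV[R]_d)
  (hZ1 : forall i : 'I_d, measurable_fun setT (fun w => Z w ord0 i))
  (s1 s2 : Y -> R) (eps : R) :
  measurable [set w | argmax_set (pert_obj s1 eps (Z w))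
                  `&` argmax_set (pert_obj s2 eps (Z w)) = set0].
Proof.
pose A (s : Y -> R) (x y : Y) := [set w | pert_obj s eps (Z w) y < pert_obj s eps (Z w) x].
have -> : [set w | argmax_set (pert_obj s1 eps (Z w))
                  `&` argmax_set (pert_obj s2 eps (Z w)) = set0] =
   \bigcap_(y in [set: Y]) (\bigcup_(x in [set: Y]) A s1 x y `|` \bigcup_(x in [set: Y]) A s2 x y).
  apply/seteqP; split => w /=.
    move=> H y _.
    case: (pselect (exists x, pert_obj s1 eps (Z w) y < pert_obj s1 eps (Z w) x)) => [[x hx]|h1].
      by left; exists x.
    case: (pselect (exists x, pert_obj s2 eps (Z w) y < pert_obj s2 eps (Z w) x)) => [[x hx]|h2].
      by right; exists x.
    have : (argmax_set (pert_obj s1 eps (Z w)) `&` argmax_set (pert_obj s2 eps (Z w))) y.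
      split => x; rewrite leNgt; apply/negP => hx; [apply: h1|apply: h2]; by exists x.
    by rewrite H.
  move=> H; apply/seteqP; split => // y [h1 h2].
  have [[x _ hx]|[x _ hx]] := H y I.
    by move: (h1 x); rewrite leNgt hx.
  by move: (h2 x); rewrite leNgt hx.
apply: fin_bigcap_measurable; first exact: finite_finset.
move=> y _; apply: measurableU; apply: fin_bigcup_measurable; try exact: finite_finset.
  by move=> x _; apply: meas_lt; apply: meas_pert.
by move=> x _; apply: meas_lt; apply: meas_pert.
Qed.

Theorem lemma2 (R : realType) (d : nat) (Y : {fset 'rV[R]_d})
  (hY : forall y : Y, ~ strict_convex_comb_of_others y)
  (eps : R) (heps : 0 < eps)
  (dT : measure_display) (T : measurableType dT) (P : probability T R)
  (Z : T -> 'rV[R]_d) (hZ : std_normal_vector P Z)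
  (s1 s2 : Y -> R) (hs1 : in_VDelta s1) (hs2 : in_VDelta s2) (hs12 : s1 <> s2) :
  (0 < P [set w | argmax_set (pert_obj s1 eps (Z w))
                  `&` argmax_set (pert_obj s2 eps (Z w)) = set0])%E.
Proof.
have [z0 [r r0 hbox]] := @det_main R d Y hY eps heps s1 s2 hs1 hs2 hs12.
case: hZ => hZ1 [hZ2 hZ3].
pose B := fun i : 'I_d => ([set` `]z0 ord0 i - r, z0 ord0 i + r[%R] : set R).
have mB : forall i, measurable (B i) by move=> i; exact: measurable_itv.
pose Box := \bigcap_(i in [set: 'I_d]) ((fun w => Z w ord0 i) @^-1` B i).
have Box_pos : (0 < P Box)%E.
  rewrite /Box hZ3 //; apply: prodE_gt0 => i; rewrite hZ2 //.
  by apply: normal_itv_gt0; lra.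
apply: (lt_le_trans Box_pos); apply: le_measure; rewrite ?inE.
- apply: fin_bigcap_measurable; first exact: finite_finset.
  move=> i _; have := hZ1 i measurableT _ (mB i); by rewrite setTI.
- exact: meas_goal.
move=> w hw; apply: hbox => i.
have := hw i I; rewrite /B /= in_itv /= => /andP[h1 h2].
rewrite ltr_norml; apply/andP; split; lra.
Qed.
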